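(* Let $F_2$ be the free group on $\{x,y\}$, $\sigma = (\{x\}, y)$, $\tau = (\{y\}, x)$, and let $u, v \in F_2$. Let $m$ be a positive integer and let $\Lambda$ be the set of all chains of the form $\tau^{m_k}\sigma^{l_k} \cdots \tau^{m_1}\sigma^{l_1}$ or $\tau^{-m_k}\sigma^{-l_k} \cdots \tau^{-m_1}\sigma^{-l_1}$ ($k \in \mathbb{N}$, all $l_i, m_i \ge 0$) of length $\sum_{i=1}^k (l_i+m_i) \le m$. Suppose that $\|\psi(u)\| = \|\psi(v)\|$ for every $\psi \in \Lambda$. Then $n([\psi(u)]; x) = n([\psi(v)]; x)$ and $n([\psi(u)]; y) = n([\psi(v)]; y)$ for every $\psi \in \Lambda$.
   Context: $\sigma$ is the automorphism with $\sigma(x) = xy$, $\sigma(y) = y$; $\tau$ is the automorphism with $\tau(y) = yx$, $\tau(x) = x$. For $w \in F_2$, $[w]$ denotes the cyclic word associated with $w$ (the set of cyclic permutations of a cyclically reduced word conjugate to $w$), and $\|w\|$ is its length. For a cyclic word $w$ and a letter $a \in \{x^{\pm1},y^{\pm1}\}$, $n(w;a)$ denotes the total number of occurrences of $a$ and $a^{-1}$ in $w$. *)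

(* Defs.v *)
From mathcomp Require Import all_boot.
Set Implicit Arguments. Unset Strict Implicit. Unset Printing Implicit Defensive.

Definition gen := bool.
Definition gx : gen := false.
Definition gy : gen := true.

(* A letter (g, e): the generator g if e = false, its inverse g^-1 if e = true. *)
Definition letter := (gen * bool)%type.
Definition word := seq letter.

Definition linv (a : letter) : letter := (a.1, ~~ a.2).
Definition winv (w : word) : word := rev (map linv w).

Definition reduce (w : word) : word :=
  foldr (fun a acc => match acc with
                      | b :: t => if b == linv a then t else a :: acc
                      | [::] => [:: a]
                      end) [::] w.

Fixpoint cyc_red_aux (n : nat) (w : word) : word :=
  match n with
  | 0 => w
  | n'.+1 => match w with
             | a :: t => if (0 < size t) && (last a t == linv a)
                         then cyc_red_aux n' (take (size t).-1 t)
                         else w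
             | [::] => w
             end
  end.

Definition cyc_red (w : word) : word := cyc_red_aux (size w) (reduce w).

Definition cnorm (w : word) : nat := size (cyc_red w).

Definition nocc (w : word) (g : gen) : nat := count (fun a => a.1 == g) (cyc_red w).

Definition subst (f : gen -> word) (w : word) : word :=
  reduce (flatten (map (fun a => if a.2 then winv (f a.1) else f a.1) w)).

Definition lx : letter := (gx, false).
Definition ly : letter := (gy, false).
Definition lxi : letter := (gx, true).
Definition lyi : letter := (gy, true).

(* sigma: x -> xy, y -> y ;  tau: y -> yx, x -> x ; and their inverses. *)
Definition sigma_im (g : gen) : word := if g then [:: ly] else [:: lx; ly].
Definition sigmainv_im (g : gen) : word := if g then [:: ly] else [:: lx; lyi].
Definition tau_im (g : gen) : word := if g then [:: ly; lx] else [:: lx].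
Definition tauinv_im (g : gen) : word := if g then [:: ly; lxi] else [:: lx].

(* A chain is given by a sign and the list [:: (l_1, m_1); ...; (l_k, m_k)].
   Positive sign: tau^{m_k} sigma^{l_k} ... tau^{m_1} sigma^{l_1};
   negative sign: tau^{-m_k} sigma^{-l_k} ... tau^{-m_1} sigma^{-l_1}.
   (Composition of maps: sigma^{l_1} is applied first.) *)
Definition apply_chain (neg : bool) (c : seq (nat * nat)) (u : word) : word :=
  let s := if neg then sigmainv_im else sigma_im in
  let t := if neg then tauinv_im else tau_im in
  foldl (fun w p => iter p.2 (subst t) (iter p.1 (subst s) w)) (reduce u) c.

Definition chain_len (c : seq (nat * nat)) : nat := sumn (map (fun p => p.1 + p.2) c).

(* Main.v *)
Require Import Defs.
From mathcomp Require Import all_boot zify.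
Set Implicit Arguments. Unset Strict Implicit. Unset Printing Implicit Defensive.

Lemma linvK (a : letter) : linv (linv a) = a.
Proof. by case: a => a1 a2; rewrite /linv /= negbK. Qed.

Lemma linv_inj : injective linv.
Proof. exact: (can_inj linvK). Qed.

Lemma linv_neq (a : letter) : (a == linv a) = false.
Proof. by case: a => [[] []]. Qed.

Definition nadj (a b : letter) : bool := b != linv a.
Definition reduced (s : word) : bool := sorted nadj s.

Lemma nadj_sym a b : nadj a b = nadj b a.
Proof. rewrite /nadj; congr negb; apply/eqP/eqP => ->; by rewrite linvK. Qed.

Definition push (a : letter) (s : word) : word :=
  match s with b :: t => if b == linv a then t else a :: s | [::] => [:: a] end.

Lemma reduce_cons a w : reduce (a :: w) = push a (reduce w).
Proof. by []. Qed.

Lemma reduce_cat u v : reduce (u ++ v) = foldr push (reduce v) u.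
Proof. by rewrite /reduce foldr_cat. Qed.

Lemma push_reduced a s : reduced s -> reduced (push a s).
Proof.
case: s => [|b t] //= H.
case: ifP => E; first by case: t H => //= c t /andP[].
by rewrite /= /nadj E H.
Qed.

Lemma reduced_reduce w : reduced (reduce w).
Proof. elim: w => //= a w IH; exact: push_reduced. Qed.

Lemma reduce_id s : reduced s -> reduce s = s.
Proof.
elim: s => //= a s IH H.
have Hs : reduced s by exact: path_sorted H.
rewrite IH //; case: s H {IH Hs} => //= b t /andP[H1 _].
by rewrite /nadj in H1; rewrite (negbTE H1).
Qed.

Lemma pushK a s : reduced s -> push a (push (linv a) s) = s.
Proof.
case: s => [|b t] /=; first by rewrite eqxx.
rewrite linvK; case: eqP => [-> | ne] H.
  case: t H => [|c t] //= /andP[H1 _].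
  by rewrite /nadj in H1; rewrite (negbTE H1).
by rewrite /= eqxx.
Qed.

Lemma reduce_push_cat a s v : reduced s ->
  reduce (push a s ++ v) = push a (reduce (s ++ v)).
Proof.
case: s => [|b t] H //.
rewrite {1}/push; case: eqP => [E|_]; last by [].
rewrite cat_cons reduce_cons E pushK //; exact: reduced_reduce.
Qed.

Lemma reduce_reduce_l u v : reduce (reduce u ++ v) = reduce (u ++ v).
Proof.
elim: u => //= a u IH.
rewrite reduce_push_cat ?reduced_reduce // IH.
by [].
Qed.

Lemma reduce_reduce_r u v : reduce (u ++ reduce v) = reduce (u ++ v).
Proof.
by rewrite !reduce_cat reduce_id // reduced_reduce.
Qed.

Lemma reduceK w : reduce (reduce w) = reduce w.
Proof. by rewrite reduce_id // reduced_reduce. Qed.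

Lemma reduce_congr u u' v v' : reduce u = reduce u' -> reduce v = reduce v' ->
  reduce (u ++ v) = reduce (u' ++ v').
Proof.
move=> H1 H2.
by rewrite -reduce_reduce_l H1 reduce_reduce_l -reduce_reduce_r H2 reduce_reduce_r.
Qed.

Lemma winv_cons a w : winv (a :: w) = rcons (winv w) (linv a).
Proof. by rewrite /winv /= rev_cons. Qed.

Lemma winv_cat u v : winv (u ++ v) = winv v ++ winv u.
Proof. by rewrite /winv map_cat rev_cat. Qed.

Lemma winvK w : winv (winv w) = w.
Proof.
by rewrite /winv map_rev revK -map_comp (eq_map linvK) map_id.
Qed.

Lemma size_winv w : size (winv w) = size w.
Proof. by rewrite /winv size_rev size_map. Qed.

Lemma reduce_winv_r w : reduce (w ++ winv w) = [::].
Proof.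
elim: w => // a w IH.
rewrite winv_cons -cats1 cat_cons catA reduce_cons -(reduce_reduce_l (w ++ winv w)) IH /=.
by rewrite eqxx.
Qed.

Lemma reduce_winv_l w : reduce (winv w ++ w) = [::].
Proof. by rewrite -{2}(winvK w) reduce_winv_r. Qed.

Lemma reduce_cancel_mid u w v : reduce (u ++ w ++ winv w ++ v) = reduce (u ++ v).
Proof.
apply: reduce_congr => //.
by rewrite catA -reduce_reduce_l reduce_winv_r.
Qed.

Lemma size_push a s : size (push a s) <= (size s).+1.
Proof. case: s => //= b t; case: ifP => //= _; exact: leqW. Qed.

Lemma size_reduce w : size (reduce w) <= size w.
Proof.
elim: w => //= a w IH.
apply: leq_trans (size_push _ _) _; by rewrite ltnS.
Qed.

Lemma cycle_reduced c : cycle nadj c -> reduced c.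
Proof. by case: c => //= x p; rewrite rcons_path => /andP[]. Qed.

Lemma cycle_cons a t : cycle nadj (a :: t) = path nadj a t && (a != linv (last a t)).
Proof. by rewrite /= rcons_path. Qed.

Lemma aux_id n c : cycle nadj c -> cyc_red_aux n c = c.
Proof.
case: n => // n; case: c => // a t; rewrite cycle_cons => /andP[_ H] /=.
case: ifP => // /andP[_ /eqP E].
by rewrite E linvK eqxx in H.
Qed.

Lemma aux_char n p c : cycle nadj c -> size p <= n ->
  cyc_red_aux n (p ++ c ++ winv p) = c.
Proof.
elim: p n => [|q p IH] n Hc Hn; first by rewrite cats0 aux_id.
case: n Hn => // n Hn.
rewrite winv_cons cat_cons -rcons_cat -rcons_cat /=.
rewrite size_rcons last_rcons eqxx /= -cats1 take_size_cat //.
exact: IH.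
Qed.

Lemma aux_ex n r : reduced r -> size r <= n ->
  exists p, r = p ++ cyc_red_aux n r ++ winv p /\ cycle nadj (cyc_red_aux n r).
Proof.
elim: n r => [|n IH] r Hr Hn.
  by case: r Hr Hn => // _ _; exists [::].
case: r Hr Hn => [|a t] Hr Hn; first by exists [::].
rewrite [cyc_red_aux _ _]/=.
case: ifP => [/andP[H1 /eqP H2]|H].
  case/lastP: t Hr Hn H1 H2 => // t z Hr Hn _.
  rewrite last_rcons => Ez.
  rewrite size_rcons -cats1 take_size_cat //.
  have Ht : reduced t.
    move: Hr; rewrite /reduced /= -cats1 cat_path => /andP[H _].
    exact: path_sorted H.
  have [|p [Ep Hc]] := IH t Ht; first by move: Hn; rewrite /= size_rcons ltnS => /ltnW.
  exists (a :: p); split => //.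
  by rewrite winv_cons -!cats1 Ez {1}Ep /= -!catA.
exists [::]; split; first by rewrite cats0.
rewrite cycle_cons; apply/andP; split; first exact: Hr.
case: t Hr Hn H => [|b t] Hr Hn H; first by rewrite /= linv_neq.
apply/negP => /eqP E.
by rewrite /= {1}E linvK eqxx in H.
Qed.

Lemma cyc_red_char w p c : reduce w = p ++ c ++ winv p -> cycle nadj c -> cyc_red w = c.
Proof.
move=> E Hc; rewrite /cyc_red E aux_char //.
apply: leq_trans (size_reduce w); by rewrite E size_cat leq_addr.
Qed.

Lemma cyc_red_ex w : exists p, reduce w = p ++ cyc_red w ++ winv p /\ cycle nadj (cyc_red w).
Proof. apply: aux_ex; [exact: reduced_reduce | exact: size_reduce]. Qed.

Lemma cyc_red_eq w w' : reduce w = reduce w' -> cyc_red w = cyc_red w'.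
Proof.
move=> E; have [p [Ep Hc]] := cyc_red_ex w'.
exact: (cyc_red_char (p := p) (etrans E Ep) Hc).
Qed.

Lemma cyc_red_reduce w : cyc_red (reduce w) = cyc_red w.
Proof. apply: cyc_red_eq; exact: reduceK. Qed.

Lemma cyc_red_cycle c : cycle nadj c -> cyc_red c = c.
Proof.
move=> Hc; apply: (@cyc_red_char _ [::]) => //.
by rewrite cats0 reduce_id // cycle_reduced.
Qed.

Lemma nadj_linv a b : nadj b (linv a) = (b != a).
Proof. rewrite /nadj; congr negb; apply/eqP/eqP => [/linv_inj|->] //. Qed.

Lemma reduced_wrap a x s : path nadj x s -> x != linv a -> last x s != a ->
  reduced (a :: (x :: s) ++ [:: linv a]).
Proof.
move=> H1 H2 H3; rewrite /reduced /= cat_path H1 /= nadj_linv H3 andbT.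
by rewrite /nadj H2.
Qed.

Lemma winv0 : winv [::] = [::].
Proof. by []. Qed.

Lemma winv1 a : winv [:: a] = [:: linv a].
Proof. by []. Qed.

Lemma conj_letter a w : perm_eq (cyc_red (a :: w ++ [:: linv a])) (cyc_red w).
Proof.
have [p [Ep Hc]] := cyc_red_ex w.
set c := cyc_red w in Ep Hc *.
have Hr : reduced (p ++ c ++ winv p) by rewrite -Ep reduced_reduce.
have E1 : reduce (a :: w ++ [:: linv a]) = reduce (a :: (p ++ c ++ winv p) ++ [:: linv a]).
  by rewrite !reduce_cons -(reduce_reduce_l w) Ep.
rewrite (cyc_red_eq E1).
suff [p' [c' [E2 [H2 H3]]]] : exists p' c', reduce (a :: (p ++ c ++ winv p) ++ [:: linv a])
   = p' ++ c' ++ winv p' /\ cycle nadj c' /\ perm_eq c' c.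
  by rewrite (cyc_red_char E2 H2).
clear Ep E1; case: p Hr => [|q p] Hr.
  rewrite cat0s winv0 cats0 in Hr *.
  case: c Hc Hr => [|z t] Hc Hr.
    by exists [::], [::]; split => //=; rewrite eqxx.
  case: (eqVneq z (linv a)) => [Ez|nz].
    exists [::], (rcons t z); split; last split.
    - rewrite winv0 cats0 cat0s.
      have -> : a :: (z :: t) ++ [:: linv a] = [::] ++ [:: a] ++ winv [:: a] ++ (t ++ [:: linv a]) by rewrite Ez.
      rewrite reduce_cancel_mid cat0s reduce_id -Ez cats1 //.
      by apply: cycle_reduced; rewrite -rot1_cons rot_cycle.
    - by rewrite -rot1_cons rot_cycle.
    - by rewrite -rot1_cons perm_rot.
  case: (eqVneq (last z t) a) => [El|nl].
    have Ec : z :: t = rcons (belast z t) a by rewrite lastI El.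
    have Hp : path nadj a (z :: t) by move: Hc; rewrite (cycle_path a) /= El.
    exists [::], (a :: belast z t); split; last split.
    - rewrite winv0 cats0 cat0s.
      have -> : a :: (z :: t) ++ [:: linv a] = (a :: belast z t) ++ [:: a] ++ winv [:: a] ++ [::]
        by rewrite Ec -cats1 cat_cons -catA.
      rewrite reduce_cancel_mid cats0 reduce_id //.
      by move: Hp; rewrite Ec /reduced /= rcons_path => /andP[].
    - by rewrite /= -Ec.
    - by rewrite Ec perm_sym perm_rcons.
  exists [:: a], (z :: t); split; last split => //.
  by rewrite reduce_id // reduced_wrap.
rewrite winv_cons in Hr *.
case: (eqVneq q (linv a)) => [Eq|nq].
  exists p, c; split => //.
  have -> : a :: ((q::p) ++ c ++ rcons (winv p) (linv q)) ++ [:: linv a] =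
     [::] ++ [:: a] ++ winv [:: a] ++ ((p ++ c ++ winv p) ++ [:: a] ++ winv [:: a] ++ [::]).
    by rewrite Eq linvK /= -cats1 -!catA.
  rewrite reduce_cancel_mid cat0s reduce_cancel_mid !cats0 reduce_id //.
  move: Hr; rewrite /reduced cat_cons -!rcons_cat /= rcons_path => /andP[H _].
  exact: path_sorted H.
exists (a :: q :: p), c; split => //.
rewrite reduce_id; first by rewrite !winv_cons -!cats1 -!catA.
apply: reduced_wrap => //.
change (last q (p ++ c ++ rcons (winv p) (linv q)) != a).
rewrite !last_cat last_rcons; apply: contra nq => /eqP <-; by rewrite linvK.
Qed.

Lemma conj_word g w : perm_eq (cyc_red (g ++ w ++ winv g)) (cyc_red w).
Proof.
elim: g => [|a g IH]; first by rewrite cat0s winv0 cats0.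
have -> : (a :: g) ++ w ++ winv (a :: g) = a :: (g ++ w ++ winv g) ++ [:: linv a]
  by rewrite winv_cons -cats1 cat_cons -!catA.
exact: perm_trans (conj_letter _ _) IH.
Qed.

Definition fimg (g e : bool) (a : letter) : word :=
  if a.1 == g then (if a.2 then [:: (~~g, ~~e); a] else [:: a; (~~g, e)]) else [:: a].
Definition Fm g e (w : word) : word := flatten (map (fimg g e) w).

Lemma fimg_linv g e a : fimg g e (linv a) = winv (fimg g e a).
Proof. by case: g e a => [] [] [[] []]. Qed.

Lemma Fm_cat g e u v : Fm g e (u ++ v) = Fm g e u ++ Fm g e v.
Proof. by rewrite /Fm map_cat flatten_cat. Qed.

Lemma Fm_cons g e a u : Fm g e (a :: u) = fimg g e a ++ Fm g e u.
Proof. by []. Qed.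

Lemma Fm_winv g e w : Fm g e (winv w) = winv (Fm g e w).
Proof.
elim: w => // a w IH.
by rewrite winv_cons -cats1 Fm_cat IH Fm_cons winv_cat /Fm /= cats0 fimg_linv.
Qed.

Lemma reduce_Fm_push g e a s : reduced s ->
  reduce (Fm g e (a :: s)) = reduce (Fm g e (push a s)).
Proof.
case: s => [|b t] H //.
rewrite /push; case: eqP => [E|_] //.
rewrite !Fm_cons E fimg_linv -(cat0s (fimg g e a ++ _)) catA -catA.
by rewrite reduce_cancel_mid.
Qed.

Lemma reduce_Fm g e w : reduce (Fm g e w) = reduce (Fm g e (reduce w)).
Proof.
elim: w => // a w IH.
rewrite Fm_cons -reduce_reduce_r IH reduce_reduce_r -Fm_cons reduce_cons.
apply: reduce_Fm_push; exact: reduced_reduce.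
Qed.

Lemma cyc_Fm_conj g e w : perm_eq (cyc_red (Fm g e w)) (cyc_red (Fm g e (cyc_red w))).
Proof.
have [p [Ep _]] := cyc_red_ex w.
have -> : cyc_red (Fm g e w) = cyc_red (Fm g e p ++ Fm g e (cyc_red w) ++ winv (Fm g e p)).
  by apply: cyc_red_eq; rewrite reduce_Fm Ep !Fm_cat Fm_winv.
exact: conj_word.
Qed.

Lemma cyc_Fm_rot g e k c : perm_eq (cyc_red (Fm g e (rot k c))) (cyc_red (Fm g e c)).
Proof.
rewrite /rot (Fm_cat g e (drop k c)).
set A := Fm g e (take k c); set B := Fm g e (drop k c).
have -> : Fm g e c = A ++ B by rewrite /A /B -Fm_cat cat_take_drop.
have -> : cyc_red (A ++ B) = cyc_red (A ++ (B ++ A) ++ winv A).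
  apply: cyc_red_eq.
  by rewrite -(cats0 (A ++ B)) -(reduce_cancel_mid (A ++ B) A [::]) !catA !cats0.
by rewrite perm_sym conj_word.
Qed.

Lemma subst_sigma w : subst sigma_im w = reduce (Fm false false w).
Proof. rewrite /subst /Fm; congr (reduce (flatten _)); apply: eq_map; by case=> [[] []]. Qed.
Lemma subst_sigmainv w : subst sigmainv_im w = reduce (Fm false true w).
Proof. rewrite /subst /Fm; congr (reduce (flatten _)); apply: eq_map; by case=> [[] []]. Qed.
Lemma subst_tau w : subst tau_im w = reduce (Fm true false w).
Proof. rewrite /subst /Fm; congr (reduce (flatten _)); apply: eq_map; by case=> [[] []]. Qed.
Lemma subst_tauinv w : subst tauinv_im w = reduce (Fm true true w).
Proof. rewrite /subst /Fm; congr (reduce (flatten _)); apply: eq_map; by case=> [[] []]. Qed.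

Fixpoint F (g e : bool) (c : word) : word :=
 match c with
 | [::] => [::]
 | a :: t =>
   if a == (g,false) then
     match t with
     | a2 :: t2 => if a2 == (~~g, ~~e) then a :: F g e t2 else a :: (~~g,e) :: F g e t
     | [::] => [:: a; (~~g, e)]
     end
   else if a == (g,true) then (~~g, ~~e) :: a :: F g e t
   else if a == (~~g, e) then
     match t with
     | a2 :: t2 => if a2 == (g,true) then a2 :: F g e t2 else a :: F g e t
     | [::] => [:: a]
     end
   else a :: F g e t
 end.

Lemma F_nil g e : F g e [::] = [::]. Proof. by []. Qed.
Lemma F_cons1 g e a : F g e [:: a] =
  if a == (g,false) then [:: a; (~~g, e)] else if a == (g,true) then [:: (~~g, ~~e); a] else [:: a].
Proof. by rewrite /=; case: ifP => //; case: ifP => //; case: ifP. Qed.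
Lemma F_cons2 g e a b t : F g e (a :: b :: t) =
  if a == (g,false) then (if b == (~~g, ~~e) then a :: F g e t else a :: (~~g,e) :: F g e (b :: t))
  else if a == (g,true) then (~~g, ~~e) :: a :: F g e (b :: t)
  else if a == (~~g, e) then (if b == (g,true) then b :: F g e t else a :: F g e (b :: t))
  else a :: F g e (b :: t).
Proof. by []. Qed.

Arguments F : simpl never.

Lemma word_ind2 (P : word -> Prop) : P [::] -> (forall a, P [:: a]) ->
  (forall a b t, P t -> P (b :: t) -> P (a :: b :: t)) -> forall c, P c.
Proof.
move=> H0 H1 H2 c.
suff : P c /\ forall a, P (a :: c) by case.
elim: c => [|b t [IH1 IH2]]; first by split.
split => // a; exact: H2.
Qed.

Fixpoint lin (P : letter -> letter -> bool) (x : letter) (s : word) : nat :=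
  match s with [::] => 0 | y :: s' => P x y + lin P y s' end.
Definition linc P (c : word) : nat := if c is x :: s then lin P x s else 0.
Definition cyc P (c : word) : nat := if c is x :: s then lin P x (rcons s x) else 0.

Definition bad (g e : bool) (a b : letter) : bool :=
  ((a == (g,false)) && (b == (~~g, ~~e))) || ((a == (~~g, e)) && (b == (g,true))).
Definition isg (g : bool) (a : letter) : bool := a.1 == g.

Lemma size_F g e c : size (F g e c) + 2 * linc (bad g e) c = size c + count (isg g) c.
Proof.
case: g; case: e; elim/word_ind2: c => [|a|a b t IHt IHbt] //;
  try (by rewrite F_cons1; case: a => [[] []]);
  rewrite F_cons2; move: IHt IHbt; case: t => [|y t];
  case: a => [[] []]; case: b => [[] []] /=; lia.
Qed.

Lemma count_F g e c : count (isg g) (F g e c) = count (isg g) c.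
Proof.
case: g; case: e; elim/word_ind2: c => [|a|a b t IHt IHbt] //;
  try (by rewrite F_cons1; case: a => [[] []]);
  rewrite F_cons2; move: IHt IHbt; case: t => [|y t];
  case: a => [[] []]; case: b => [[] []] /=; lia.
Qed.

Arguments Fm : simpl never.
Arguments reduce : simpl never.

Lemma rcons_congr x X Y : reduce X = reduce Y -> reduce (x :: X) = reduce (x :: Y).
Proof. by rewrite !reduce_cons => ->. Qed.

Lemma rcan x y R : y = linv x -> reduce (x :: y :: R) = reduce R.
Proof.
move=> ->; rewrite -(cat0s (x :: _)).
have -> : [::] ++ x :: linv x :: R = [::] ++ [:: x] ++ winv [:: x] ++ R by [].
by rewrite reduce_cancel_mid.
Qed.

Lemma reduce_F g e c : reduce (Fm g e c) = reduce (F g e c).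
Proof.
case: g; case: e; elim/word_ind2: c => [|a|a b t IHt IHbt] //;
  try (by rewrite F_cons1 /Fm /=; case: a => [[] []]);
  rewrite F_cons2 Fm_cons; move: IHt IHbt; case: a => [[] []]; case: b => [[] []] => IHt IHbt;
  rewrite /fimg /=;
  repeat (match goal with |- reduce (?x :: _) = reduce (?x :: _) => apply: rcons_congr end);
  try (by rewrite IHbt);
  rewrite Fm_cons /fimg /= rcan //;
  repeat (match goal with |- reduce (?x :: _) = reduce (?x :: _) => apply: rcons_congr end);
  by [].
Qed.

Definition hF g e (a : letter) (t : word) : letter :=
  if a == (g,false) then a else if a == (g,true) then (~~g,~~e)
  else if (a == (~~g,e)) && (ohead t == Some (g,true)) then (g,true) else a.

Lemma F_head g e a t : exists r, F g e (a :: t) = hF g e a t :: r.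
Proof.
case: g; case: e; case: a => [[] []]; case: t => [|b t];
  rewrite ?F_cons1 ?F_cons2 /hF //=; try case: b => [[] []]; rewrite /=; eexists; reflexivity.
Qed.

Definition okk g e (z y : letter) : bool :=
  if y == (g,true) then nadj z (~~g,~~e)
  else if y == (~~g,e) then nadj z (~~g,e) && nadj z (g,true) else nadj z y.

Lemma okk_hF g e z y t : okk g e z y -> nadj z (hF g e y t).
Proof.
rewrite /okk /hF; case: g; case: e; case: y => [[] []] /=; try done;
  try (case: (ohead t == _)); try done; try (by case/andP).
Qed.

Lemma path_F g e s x : reduced s -> (if s is y :: _ then okk g e x y else true) ->
  path nadj x (F g e s).
Proof.
elim/word_ind2: s x => [|a|a b t IHt IHbt] x //.
  by rewrite F_cons1 /okk; case: g; case: e; case: a => [[] []]; case: x => [[] []].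
move=> Hr Hx.
have Hx' := okk_hF (b :: t) Hx.
have Hbt : reduced (b :: t) by exact: path_sorted Hr.
have Ht : reduced t by exact: path_sorted Hbt.
have Hab : nadj a b by case/andP: Hr.
clear Hr Hx; move: Hx' Hab Hbt Ht IHt IHbt; rewrite F_cons2 /hF.
case: t => [|y t]; case: g; case: e; case: a => [[] []]; case: b => [[] []] => //= Hx' Hab Hbt Ht IHt IHbt;
  rewrite ?Hx' //=;
  try (apply: IHbt => //; by []);
  (apply: IHt => //; move: Hbt; clear; case: y => [[] []]; rewrite /okk /= => H; (done || by case/andP: H)).
Qed.

Lemma sorted_F g e c : reduced c -> reduced (F g e c).
Proof.
case: c => [|a t] // Hr.
have [r Er] := F_head g e a t.
have : path nadj (hF g e a t) (F g e (a :: t)).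
  apply: path_F => //; rewrite /hF /okk; clear; case: g; case: e; case: a => [[] []] //=;
  by case: (ohead t == _).
by rewrite Er /= => /andP[].
Qed.

Definition catcond g e (c t : word) : bool :=
  match c, t with x :: s, y :: _ => ~~ bad g e (last x s) y | _, _ => true end.

Lemma F_cat g e c t : catcond g e c t -> F g e (c ++ t) = F g e c ++ F g e t.
Proof.
elim/word_ind2: c => [|a|a b s IHs IHbs] //.
  case: t => [|y t]; first by rewrite !cats0.
  rewrite /= F_cons2 F_cons1 /bad; case: g; case: e; case: a => [[] []]; case: y => [[] []] //=.
move=> H.
have H1 : catcond g e (b :: s) t by exact: H.
have H2 : catcond g e s t by move: H1; clear; case: s => [|z s].
rewrite cat_cons cat_cons F_cons2 F_cons2 -cat_cons IHbs // IHs //.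
by repeat case: ifP => _.
Qed.

Lemma lin_cat P x s1 s2 : lin P x (s1 ++ s2) = lin P x s1 + lin P (last x s1) s2.
Proof. elim: s1 x => [|y s IH] x //=; rewrite IH; lia. Qed.

Lemma cyc_cons P z t : cyc P (z :: t) = lin P z t + P (last z t) z.
Proof. by rewrite /cyc -cats1 lin_cat /= addn0. Qed.

Lemma cyc_rot1 P c : cyc P (rot 1 c) = cyc P c.
Proof.
case: c => [|z [|y t]] //.
rewrite rot1_cons -cats1 cat_cons !cyc_cons lin_cat /= last_cat /=; lia.
Qed.

Lemma cyc_rot P k c : cyc P (rot k c) = cyc P c.
Proof.
elim: k => [|k IH]; first by rewrite rot0.
case: (ltnP k (size c)) => H; first by rewrite rotS // cyc_rot1.
by rewrite rot_oversize //; apply: leqW.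
Qed.

Lemma lin_ext P Q x s : P =2 Q -> lin P x s = lin Q x s.
Proof. move=> E; elim: s x => //= y s IH x; by rewrite E IH. Qed.

Definition Pot (a : letter) : nat := (a == (true,false)) || (a == (false,true)).

Lemma lin_pot x s : path nadj x s ->
  lin (bad false true) x s + Pot x = lin (bad true true) x s + Pot (last x s).
Proof.
elim: s x => [|y s IH] x //= /andP[H1 H2].
have := IH y H2.
move: (last y s) H1 => l; clear; case: x => [[] []]; case: y => [[] []] => /= H1; rewrite /nadj /= in H1; rewrite /Pot /=; (done || lia).
Qed.

Lemma cyc_neg c : cycle nadj c -> cyc (bad false true) c = cyc (bad true true) c.
Proof.
case: c => // z t /= H.
have := lin_pot H; rewrite last_rcons; lia.
Qed.

Lemma cyc_pos c : cyc (bad false false) c = cyc (bad true false) c.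
Proof.
case: c => // z t; apply: lin_ext => a b.
by rewrite /bad; case: a => [[] []]; case: b => [[] []].
Qed.

Lemma good_rot g e z t : exists k, catcond g e (rot k (z :: t)) (rot k (z :: t)).
Proof.
set c := z :: t.
pose P := fun a : letter => (a != (~~g, ~~e)) && (a != (g,true)).
case: (boolP (has P c)) => H.
  exists (find P c).
  have Hk : find P c < size c by rewrite -has_find.
  rewrite /rot (drop_nth z Hk) /=.
  have := nth_find z H; rewrite /P => /andP[/negbTE H1 /negbTE H2].
  by rewrite /bad H1 H2 !andbF.
exists 0; rewrite rot0 /=.
have : last z t \in c by rewrite mem_last.
have /hasPn Hn := H.
move/Hn; rewrite /P negb_and !negbK => /orP[]/eqP ->;
  by rewrite /bad; case: g {P H Hn}; case: e.
Qed.

Lemma cycle_F g e c : catcond g e c c -> cycle nadj c -> cycle nadj (F g e c).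
Proof.
case: c => [|z t] // Hcc Hc.
have Hr : reduced ((z :: t) ++ (z :: t)).
  move: Hc; rewrite cycle_cons /reduced cat_cons /= cat_path /= => /andP[H1 H2].
  by rewrite H1 /= /nadj H2.
have := sorted_F g e Hr; rewrite F_cat //.
have [r ->] := F_head g e z t.
rewrite /reduced cat_cons /= cat_path /= rcons_path => /and3P[-> H _] /=.
exact: H.
Qed.

Lemma gen_formula g e w :
  size (cyc_red (Fm g e w)) + 2 * cyc (bad g e) (cyc_red w)
    = size (cyc_red w) + count (isg g) (cyc_red w)
  /\ count (isg g) (cyc_red (Fm g e w)) = count (isg g) (cyc_red w).
Proof.
have [p [_ Hc]] := cyc_red_ex w.
have P1 := cyc_Fm_conj g e w.
move: P1 Hc; set c := cyc_red w => P1 Hc.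
case Ec : c => [|z t].
  by move: P1; rewrite Ec => /perm_size; case: (cyc_red (Fm g e w)).
have [k Hk] := good_rot g e z t.
rewrite -Ec in Hk *.
have P2 := cyc_Fm_rot g e k c.
set c' := rot k c in Hk P2.
have Hc' : cycle nadj c' by rewrite rot_cycle.
have E3 : cyc_red (Fm g e c') = F g e c'.
  rewrite -(cyc_red_cycle (cycle_F Hk Hc')).
  apply: cyc_red_eq; rewrite reduce_F reduce_id //.
  by apply: cycle_reduced; apply: cycle_F.
rewrite E3 in P2.
have P3 : perm_eq (cyc_red (Fm g e w)) (F g e c') by rewrite (perm_trans P1) // perm_sym.
rewrite (perm_size P3) (permP P3) count_F.
have Ec' : linc (bad g e) c' = cyc (bad g e) c.
  rewrite -(cyc_rot _ k c) -/c'.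
  case: c' Hk {Hc' E3 P2 P3} => [|y s] // Hk.
  rewrite cyc_cons /=; move: Hk; rewrite /catcond => /negbTE ->; by rewrite addn0.
have Pr : perm_eq c' c by rewrite /c' perm_rot perm_refl.
have := size_F g e c'; rewrite Ec' size_rot (permP Pr) => ->.
by split.
Qed.

Lemma cnorm_Fm g e w : cnorm (reduce (Fm g e w)) = size (cyc_red (Fm g e w)).
Proof. by rewrite /cnorm cyc_red_reduce. Qed.

Lemma nocc_Fm g e w h : nocc (reduce (Fm g e w)) h = count (isg h) (cyc_red (Fm g e w)).
Proof. by rewrite /nocc cyc_red_reduce. Qed.

Lemma nocc_isg w h : nocc w h = count (isg h) (cyc_red w).
Proof. by []. Qed.

Lemma key_C w : nocc w gx + nocc w gy = cnorm w.
Proof.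
rewrite /nocc /cnorm -(count_predC (fun a : letter => a.1 == gx)); congr addn.
by apply: eq_count; case=> [[] []].
Qed.

Lemma key_A neg w :
  cnorm (subst (if neg then sigmainv_im else sigma_im) w) + nocc w gy =
  cnorm (subst (if neg then tauinv_im else tau_im) w) + nocc w gx.
Proof.
rewrite !nocc_isg /gx /gy.
case: neg; rewrite ?subst_sigma ?subst_sigmainv ?subst_tau ?subst_tauinv !cnorm_Fm.
  have [H1 _] := gen_formula false true w.
  have [H2 _] := gen_formula true true w.
  have [p [_ Hc]] := cyc_red_ex w.
  rewrite (cyc_neg Hc) in H1; lia.
have [H1 _] := gen_formula false false w.
have [H2 _] := gen_formula true false w.
rewrite cyc_pos in H1; lia.
Qed.

Lemma key_B1 neg w : nocc (subst (if neg then sigmainv_im else sigma_im) w) gx = nocc w gx.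
Proof.
case: neg; rewrite ?subst_sigma ?subst_sigmainv nocc_Fm nocc_isg.
  by case: (gen_formula false true w).
by case: (gen_formula false false w).
Qed.

Lemma key_B2 neg w : nocc (subst (if neg then tauinv_im else tau_im) w) gy = nocc w gy.
Proof.
case: neg; rewrite ?subst_tau ?subst_tauinv nocc_Fm nocc_isg.
  by case: (gen_formula true true w).
by case: (gen_formula true false w).
Qed.

Lemma apply_rcons neg c p w : apply_chain neg (rcons c p) w =
  iter p.2 (subst (if neg then tauinv_im else tau_im))
    (iter p.1 (subst (if neg then sigmainv_im else sigma_im)) (apply_chain neg c w)).
Proof. by rewrite /apply_chain foldl_rcons. Qed.

Lemma len_rcons c p : chain_len (rcons c p) = chain_len c + (p.1 + p.2).
Proof. by rewrite /chain_len map_rcons sumn_rcons. Qed.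

Lemma chain_dec neg c :
  (chain_len c = 0 /\ forall w, apply_chain neg c w = reduce w) \/
  exists c', chain_len c = (chain_len c').+1 /\
   ((forall w, apply_chain neg c w = subst (if neg then sigmainv_im else sigma_im) (apply_chain neg c' w)) \/
    (forall w, apply_chain neg c w = subst (if neg then tauinv_im else tau_im) (apply_chain neg c' w))).
Proof.
elim/last_ind: c => [|c [l k] IH]; first by left.
case: k => [|k].
  case: l => [|l].
    case: IH => [[H1 H2]|[c' [H1 H2]]].
      by left; split; [rewrite len_rcons H1 | move=> w; rewrite apply_rcons H2].
    right; exists c'; split; first by rewrite len_rcons H1 /= !addn0.
    by case: H2 => H2; [left|right] => w; rewrite apply_rcons /= H2.
  right; exists (rcons c (l, 0)); split; first by rewrite !len_rcons /=; lia.
  by left => w; rewrite !apply_rcons /=.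
right; exists (rcons c (l, k)); split; first by rewrite !len_rcons /=; lia.
by right => w; rewrite !apply_rcons /=.
Qed.

Theorem lemma2p4 (m : nat) (u v : word) :
  0 < m ->
  (forall (neg : bool) (c : seq (nat * nat)), chain_len c <= m ->
     cnorm (apply_chain neg c u) = cnorm (apply_chain neg c v)) ->
  forall (neg : bool) (c : seq (nat * nat)), chain_len c <= m ->
    nocc (apply_chain neg c u) gx = nocc (apply_chain neg c v) gx /\
    nocc (apply_chain neg c u) gy = nocc (apply_chain neg c v) gy.
Proof.
move=> Hm Hyp neg.
have base : forall c, (forall w, apply_chain neg c w = reduce w) ->
    nocc (apply_chain neg c u) gx = nocc (apply_chain neg c v) gx /\
    nocc (apply_chain neg c u) gy = nocc (apply_chain neg c v) gy.
  move=> c Hc; rewrite !Hc.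
  have H0 := Hyp neg [::] isT.
  have H1 := Hyp neg [:: (1, 0)] Hm.
  have H2 := Hyp neg [:: (0, 1)] Hm.
  rewrite /apply_chain /= in H0 H1 H2.
  have A1 := key_A neg (reduce u); have A2 := key_A neg (reduce v).
  have C1 := key_C (reduce u); have C2 := key_C (reduce v).
  split; lia.
suff : forall n c, chain_len c <= n -> chain_len c <= m ->
    nocc (apply_chain neg c u) gx = nocc (apply_chain neg c v) gx /\
    nocc (apply_chain neg c u) gy = nocc (apply_chain neg c v) gy.
  by move=> H c Hc; exact: H (leqnn _) Hc.
elim => [|n IH] c Hn Hcm.
  case: (chain_dec neg c) => [[_ H]|[c' [E _]]]; first exact: base.
  by rewrite E in Hn.
case: (chain_dec neg c) => [[_ H]|[c' [E HH]]]; first exact: base.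
have Hn' : chain_len c' <= n by rewrite E in Hn.
have Hm' : chain_len c' <= m by rewrite E in Hcm; apply: ltnW.
have [IH1 IH2] := IH c' Hn' Hm'.
case: HH => H.
  have Hc := Hyp neg c Hcm; rewrite !H in Hc *.
  rewrite !key_B1 IH1; split => //.
  have C1 := key_C (subst (if neg then sigmainv_im else sigma_im) (apply_chain neg c' u)).
  have C2 := key_C (subst (if neg then sigmainv_im else sigma_im) (apply_chain neg c' v)).
  rewrite !key_B1 in C1 C2; lia.
have Hc := Hyp neg c Hcm; rewrite !H in Hc *.
rewrite !key_B2 IH2; split => //.
have C1 := key_C (subst (if neg then tauinv_im else tau_im) (apply_chain neg c' u)).
have C2 := key_C (subst (if neg then tauinv_im else tau_im) (apply_chain neg c' v)).
rewrite !key_B2 in C1 C2; lia.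
Qed.
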